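(* Under Assumption 1, let $(x^k)_{k\in\mathbb{N}}$ be generated by PPGA. Then: (i) there exists $a>0$ such that $F(x^{k+1})+\frac a2\|x^{k+1}-x^k\|_2^2\le F(x^k)$ for all $k\in\mathbb{N}$; (ii) there exist $b>0$ and $w^{k+1}\in\partial F(x^{k+1})$ such that $\|w^{k+1}\|_2\le b\|x^{k+1}-x^k\|_2$ for all $k\in\mathbb{N}$.
   Context: Let $f:\mathbb{R}^n\to(-\infty,+\infty]$ be proper lsc, $g,h:\mathbb{R}^n\to\mathbb{R}$, $\Omega:=\{x:g(x)\ne0\}$, $F(x):=\frac{f(x)+h(x)}{g(x)}$ on $\Omega\cap\mathrm{dom}(f)$ and $+\infty$ otherwise. Assumption 1: (i) $f$ locally Lipschitz on $\mathrm{dom}(f)\cap\Omega$; (ii) $g$ locally Lipschitz continuously differentiable and positive on $\Omega\cap\mathrm{dom}(f)$; (iii) $\nabla h$ is $L$-Lipschitz, $L>0$; (iv) $f+h\ge0$ on $\mathrm{dom}(f)$, $\Omega\cap\mathrm{dom}(f)\ne\emptyset$; (v) $\mathrm{prox}_{f-\gamma g}(x)\ne\emptyset$ for all $x$, $\gamma\ge0$; (vi) $F$ lsc and level bounded. $\mathrm{prox}_\varphi(x):=\arg\min_u\{\varphi(u)+\frac12\|u-x\|_2^2\}$. Fréchet subdifferential: $\hat\partial\varphi(x):=\{v:\liminf_{z\to x,z\ne x}\frac{\varphi(z)-\varphi(x)-\langle v,z-x\rangle}{\|z-x\|_2}\ge0\}$. Limiting subdifferential: $\partial\varphi(x):=\{v:\exists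 x^k\to x,\ \varphi(x^k)\to\varphi(x),\ v^k\in\hat\partial\varphi(x^k),\ v^k\to v\}$. PPGA: choose $x^0\in\Omega\cap\mathrm{dom}(f)$ and $0<\underline\alpha\le\alpha_k\le\overline\alpha<1/L$; for $k=0,1,\dots$ set $C_k:=F(x^k)$ and pick any $x^{k+1}\in\mathrm{prox}_{\alpha_k(f-C_kg)}(x^k-\alpha_k\nabla h(x^k))$. *)

(* Defs.v *)
From HB Require Import structures.
From mathcomp Require Import all_boot all_order all_algebra.
From mathcomp Require Import all_classical all_reals all_analysis.
Set Implicit Arguments. Unset Strict Implicit. Unset Printing Implicit Defensive.
Import Order.TTheory GRing.Theory Num.Theory.
Import numFieldNormedType.Exports.
Local Open Scope classical_set_scope.
Local Open Scope ring_scope.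

Section Defs.
Variables (R : realType) (n : nat).
Notation vec := 'rV[R]_n.

Definition dot (x y : vec) : R := \sum_(i < n) x ord0 i * y ord0 i.
Definition norm2 (x : vec) : R := Num.sqrt (dot x x).

Definition is_grad (h : vec -> R) (G x : vec) : Prop :=
  forall eps : R, 0 < eps -> exists2 delta : R, 0 < delta &
    forall d : vec, norm2 d < delta -> `|h (x + d) - h x - dot G d| <= eps * norm2 d.

Definition lsc (phi : vec -> \bar R) : Prop :=
  forall (x : vec) (M : R), (M%:E < phi x)%E -> exists2 delta : R, 0 < delta &
    forall z : vec, norm2 (z - x) < delta -> (M%:E < phi z)%E.

Definition level_bounded (phi : vec -> \bar R) : Prop :=
  forall alpha : R, exists M : R, forall x : vec, (phi x <= alpha%:E)%E -> norm2 x <= M.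

Definition prox (phi : vec -> \bar R) (x : vec) : set vec :=
  [set u | forall u' : vec,
     (phi u + (norm2 (u - x) ^+ 2 / 2)%:E <= phi u' + (norm2 (u' - x) ^+ 2 / 2)%:E)%E].

Definition frechet_subdiff (phi : vec -> \bar R) (x : vec) : set vec :=
  [set v | phi x \is a fin_num /\
     forall eps : R, 0 < eps -> exists2 delta : R, 0 < delta &
       forall z : vec, 0 < norm2 (z - x) < delta ->
         ((- (eps * norm2 (z - x)))%:E <= phi z - phi x - (dot v (z - x))%:E)%E].

Definition limiting_subdiff (phi : vec -> \bar R) (x : vec) : set vec :=
  [set v | exists (xs vs : nat -> vec),
     [/\ xs @ \oo --> x,
         (fun j => phi (xs j)) @ \oo --> phi x,
         (forall j, frechet_subdiff phi (xs j) (vs j)) &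
         vs @ \oo --> v]].

Definition omega_dom (f : vec -> \bar R) (g : vec -> R) (x : vec) : bool :=
  (g x != 0) && (f x \is a fin_num).

Definition Fobj (f : vec -> \bar R) (g h : vec -> R) (x : vec) : \bar R :=
  if omega_dom f g x then ((fine (f x) + h x) / g x)%:E else +oo%E.

End Defs.

(* Main.v *)
Require Import Defs.
From HB Require Import structures.
From mathcomp Require Import all_boot all_order all_algebra.
From mathcomp Require Import all_classical all_reals all_analysis.
From mathcomp Require Import ring lra.
Import Order.TTheory GRing.Theory Num.Theory.
Import numFieldNormedType.Exports.
Local Open Scope classical_set_scope.
Local Open Scope ring_scope.

Module Aux.
Set Implicit Arguments. Unset Strict Implicit.


Section Vec.
Variables (R : realType) (n : nat).
Notation vec := 'rV[R]_n.
Implicit Types (x y z : vec) (a : R).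

Lemma dotC x y : dot x y = dot y x.
Proof. by apply: eq_bigr => i _; rewrite mulrC. Qed.
Lemma dotDl x y z : dot (x + y) z = dot x z + dot y z.
Proof. by rewrite /dot -big_split; apply: eq_bigr => i _; rewrite mxE mulrDl. Qed.
Lemma dotDr x y z : dot z (x + y) = dot z x + dot z y.
Proof. by rewrite dotC dotDl !(dotC z). Qed.
Lemma dotZl a x y : dot (a *: x) y = a * dot x y.
Proof. by rewrite /dot mulr_sumr; apply: eq_bigr => i _; rewrite mxE mulrA. Qed.
Lemma dotZr a x y : dot y (a *: x) = a * dot y x.
Proof. by rewrite dotC dotZl dotC. Qed.
Lemma dotNl x y : dot (- x) y = - dot x y.
Proof. by rewrite -scaleN1r dotZl mulN1r. Qed.
Lemma dotNr x y : dot y (- x) = - dot y x.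
Proof. by rewrite dotC dotNl dotC. Qed.
Lemma dotBl x y z : dot (x - y) z = dot x z - dot y z.
Proof. by rewrite dotDl dotNl. Qed.
Lemma dotBr x y z : dot z (x - y) = dot z x - dot z y.
Proof. by rewrite dotDr dotNr. Qed.
Lemma dot0l y : dot 0 y = 0.
Proof. by rewrite -(scale0r (0 : vec)) dotZl mul0r. Qed.
Lemma dot0r y : dot y 0 = 0.
Proof. by rewrite dotC dot0l. Qed.
Lemma dotxx_ge0 x : 0 <= dot x x.
Proof. by apply: sumr_ge0 => i _; rewrite -expr2 sqr_ge0. Qed.
Lemma norm2_sq x : norm2 x ^+ 2 = dot x x.
Proof. by rewrite /norm2 sqr_sqrtr // dotxx_ge0. Qed.
Lemma norm2_ge0 x : 0 <= norm2 x.
Proof. exact: sqrtr_ge0. Qed.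
Lemma norm2Z a x : norm2 (a *: x) = `|a| * norm2 x.
Proof.
by rewrite /norm2 dotZl dotZr mulrA -expr2 sqrtrM ?sqr_ge0 // sqrtr_sqr.
Qed.
Lemma norm2N x : norm2 (- x) = norm2 x.
Proof. by rewrite -scaleN1r norm2Z normrN normr1 mul1r. Qed.
Lemma norm2B x y : norm2 (x - y) = norm2 (y - x).
Proof. by rewrite -norm2N opprB. Qed.
Lemma norm2_0 : norm2 (0 : vec) = 0.
Proof. by rewrite /norm2 dot0l sqrtr0. Qed.
Lemma norm2_eq0 x : norm2 x = 0 -> x = 0.
Proof.
move=> H; have : dot x x = 0 by rewrite -norm2_sq H expr0n.
move=> /psumr_eq0P H2.
have {}H2 := H2 (fun j _ => ltac:(by rewrite -expr2 sqr_ge0)).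
apply/rowP => i; rewrite mxE.
by have := H2 i isT; rewrite -expr2 => /eqP; rewrite sqrf_eq0 => /eqP.
Qed.
Lemma norm2_sqD x y :
  norm2 (x + y) ^+ 2 = norm2 x ^+ 2 + 2 * dot x y + norm2 y ^+ 2.
Proof. by rewrite !norm2_sq !dotDl !dotDr (dotC y x); ring. Qed.

Lemma CS x y : `|dot x y| <= norm2 x * norm2 y.
Proof.
have key : dot x y ^+ 2 <= dot x x * dot y y.
  have [A0|Apos] := eqVneq (dot x x) 0.
    have x0 : x = 0 by apply: norm2_eq0; rewrite /norm2 A0 sqrtr0.
    by rewrite x0 dot0l dot0r expr0n /= mul0r.
  have Age : 0 < dot x x by rewrite lt_def Apos dotxx_ge0.
  have := dotxx_ge0 ((dot x x) *: y - (dot x y) *: x).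
  rewrite !dotBl !dotBr !dotZl !dotZr (dotC y x) => H.
  have : 0 <= dot x x * (dot x x * dot y y - dot x y ^+ 2) by nra.
  by rewrite pmulr_rge0 // subr_ge0.
rewrite -(ger0_norm (norm2_ge0 x)) -(ger0_norm (norm2_ge0 y)) -normrM.
rewrite -ler_sqr ?nnegrE ?normr_ge0 // !real_normK ?num_real //.
by rewrite exprMn !norm2_sq.
Qed.

Lemma norm2D x y : norm2 (x + y) <= norm2 x + norm2 y.
Proof.
rewrite -ler_sqr ?nnegrE ?addr_ge0 ?norm2_ge0 // norm2_sqD.
have := CS x y; have := ler_norm (dot x y); nra.
Qed.

Lemma norm2DB x y : norm2 (x - y) <= norm2 x + norm2 y.
Proof. by rewrite -(norm2N y) norm2D. Qed.

Lemma coord_le_norm2 x i : `|x ord0 i| <= norm2 x.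
Proof.
rewrite -(ger0_norm (norm2_ge0 x)) -ler_sqr ?nnegrE ?normr_ge0 //.
rewrite real_normK ?num_real // real_normK ?num_real // norm2_sq /dot.
rewrite (bigD1 i) //= -expr2 lerDl; apply: sumr_ge0 => j _.
by rewrite -expr2 sqr_ge0.
Qed.

Lemma norm2_le_coord x e : 0 <= e -> (forall i, `|x ord0 i| <= e) ->
  norm2 x <= n%:R * e.
Proof.
move=> e0 H; rewrite -(ger0_norm (norm2_ge0 x)).
rewrite -ler_sqr ?nnegrE ?normr_ge0 ?mulr_ge0 ?ler0n //.
rewrite real_normK ?num_real // norm2_sq.
apply: (@le_trans _ _ (\sum_(i < n) e ^+ 2)).
  apply: ler_sum => i _; rewrite -expr2 -real_normK ?num_real //.
  by rewrite lerXn2r ?nnegrE ?normr_ge0.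
rewrite sumr_const card_ord exprMn -[e ^+ 2 *+ n]mulr_natl.
apply: ler_wpM2r; first by rewrite sqr_ge0.
rewrite -natrX ler_nat; case: n => // m; rewrite expnS leq_pmulr //.

Qed.

Lemma ball_conv (xs y z : vec) (del t : R) :
  norm2 (y - xs) < del -> norm2 (z - xs) < del -> 0 <= t <= 1 ->
  norm2 (y + t *: (z - y) - xs) < del.
Proof.
move=> Hy Hz /andP [t0 t1].
have -> : y + t *: (z - y) - xs = (1 - t) *: (y - xs) + t *: (z - xs).
  by apply/rowP => i; rewrite !mxE; ring.
apply: le_lt_trans (norm2D _ _) _; rewrite !norm2Z !ger0_norm ?subr_ge0 //.
set a := norm2 (y - xs); set b := norm2 (z - xs); set m := Num.max a b.
have am : a <= m by rewrite le_max lexx.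
have bm : b <= m by rewrite le_max lexx orbT.
have md : m < del by rewrite gt_max Hy Hz.
have h1 : (1 - t) * a <= (1 - t) * m by apply: ler_wpM2l; rewrite ?subr_ge0.
have h2 : t * b <= t * m by apply: ler_wpM2l.
lra.
Qed.

End Vec.


Section Grad.
Variables (R : realType) (n : nat).
Notation vec := 'rV[R]_n.

Lemma grad_line (phi : vec -> R) (G y d : vec) (t : R) :
  is_grad phi G (y + t *: d) ->
  is_derive t (1 : R) (fun s => phi (y + s *: d)) (dot G d).
Proof.
move=> Hg.
have L : (fun h : R => h^-1 *: (((fun s => phi (y + s *: d)) \o shift t) (h *: 1)
   - phi (y + t *: d))) @ 0^' --> dot G d.
  apply/cvgrPdist_le => e e0.
  set c := norm2 d + 1.
  have c0 : 0 < c by rewrite /c ltr_wpDl ?norm2_ge0.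
  have [del del0 Hdel] := Hg (e / c) (divr_gt0 e0 c0).
  apply/nbhs_ballP; exists (del / c); first exact: divr_gt0.
  move=> s; rewrite /ball /= sub0r normrN => hs s0.
  have sn0 : s != 0 by [].
  have es : y + (s *: 1 + t) *: d = (y + t *: d) + s *: d.
    by rewrite scalerDl addrAC addrA /GRing.scale /= mulr1.
  rewrite /= es.
  have Hn : norm2 (s *: d) < del.
    rewrite norm2Z; move: hs; rewrite ltr_pdivlMr // => hs.
    apply: le_lt_trans hs; apply: ler_wpM2l; first exact: normr_ge0.
    by rewrite /c lerDl.
  have := Hdel _ Hn; rewrite dotZr norm2Z.
  set X := phi _ - phi _ => HX.
  have -> : dot G d - s^-1 *: X = s^-1 * (s * dot G d - X).
    rewrite -[s^-1 *: X]/(s^-1 * X); field; exact: sn0.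
  suff Hs : `|s^-1 * (s * dot G d - X)| <= e :> R by exact: Hs.
  rewrite normrM normfV distrC.
  have sp : 0 < `|s| by rewrite normr_gt0.
  rewrite ler_pdivrMl //; apply: le_trans HX _.
  have qc : e / c * c = e by rewrite divfK // gt_eqF.
  have q0 : 0 <= e / c by rewrite divr_ge0 // ltW.
  have hq : e / c * norm2 d <= e.
    by rewrite -[X in _ <= X]qc ler_wpM2l // /c lerDl.
  by rewrite mulrCA ler_wpM2l ?normr_ge0.
apply: DeriveDef; first exact: (cvgP _ L).
by rewrite /derive; apply: cvg_lim L.
Qed.

Lemma lip_seg (phi : vec -> R) (Gp : vec -> vec) (y z : vec) (M : R) :
  (forall t, 0 <= t <= 1 ->
     is_grad phi (Gp (y + t *: (z - y))) (y + t *: (z - y)) /\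
     norm2 (Gp (y + t *: (z - y))) <= M) ->
  `|phi z - phi y| <= M * norm2 (z - y).
Proof.
move=> H.
set d := z - y.
set psi := fun s : R => phi (y + s *: d).
have Dpsi (t : R) : 0 <= t <= 1 -> is_derive t (1:R) psi (dot (Gp (y + t *: d)) d).
  by move=> /H [Hg _]; apply: grad_line.
have := @MVT_segment R psi (fun s => dot (Gp (y + s *: d)) d) 0 1 ler01.
case.
- move=> s; rewrite in_itv /= => /andP [s0 s1]; apply: Dpsi.
  by rewrite !ltW.
- apply: derivable_within_continuous => s; rewrite in_itv /= => hs.
  by have [] := Dpsi s hs.
move=> c; rewrite in_itv /= => hc.
rewrite /psi /= scale1r scale0r addr0 subr0 mulr1.
have -> : y + d = z by rewrite /d addrC subrK.
move=> ->.
have [_ HM] := H c hc.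
apply: le_trans (CS _ _) _; apply: ler_wpM2r; first exact: norm2_ge0.
exact: HM.
Qed.

Lemma descent (phi : vec -> R) (G : vec -> vec) (L : R) :
  (forall u, is_grad phi (G u) u) ->
  (forall u v, norm2 (G u - G v) <= L * norm2 (u - v)) ->
  forall y d, phi (y + d) <= phi y + dot (G y) d + L / 2 * norm2 d ^+ 2.
Proof.
move=> Hg Hl y d.
set a := dot (G y) d.
set c := L / 2 * norm2 d ^+ 2.
set psi := fun s : R => phi (y + s *: d).
set lin := fun s : R => s * a.
set quad := fun s : R => s ^+ 2 * c.
have D1 s : is_derive s (1:R) psi (dot (G (y + s *: d)) d).
  exact: grad_line.
have D2 s : is_derive s (1:R) lin a.
  apply: (@is_derive_eq _ _ _ _ _ _ _ _ (is_deriveM (is_derive_id s 1) (is_derive_cst a s 1))).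
  by rewrite /GRing.scale /= mulr0 add0r mulr1.
have D3 s : is_derive s (1:R) quad (2 * s * c).
  apply: (@is_derive_eq _ _ _ _ _ _ _ _
    (is_deriveM (is_deriveX 2 (is_derive_id s 1)) (is_derive_cst c s 1))).
  by rewrite /GRing.scale /= mulr0 add0r mulr1 /= expr1; ring.
set chi := (psi - lin) - quad.
have D s : is_derive s (1:R) chi (dot (G (y + s *: d)) d - a - 2 * s * c).
  exact: is_deriveB (is_deriveB (D1 s) (D2 s)) (D3 s).
have : chi 1 <= chi 0.
  apply: (@ler0_derive1_le_cc R chi 0 1).
  - by move=> s _; case: (D s).
  - move=> s; rewrite in_itv /= => /andP [s0 s1].
    rewrite derive1E; case: (D s) => _ ->.
    rewrite /a -dotBl.
    have H4 := ler_norm (dot (G (y + s *: d) - G y) d).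
    have H5 := norm2_ge0 d.
    have H2 := CS (G (y + s *: d) - G y) d.
    have H1 := Hl (y + s *: d) y.
    rewrite addrAC subrr add0r norm2Z ger0_norm in H1; last exact: ltW.
    have H3 : norm2 (G (y + s *: d) - G y) * norm2 d <= L * (s * norm2 d) * norm2 d.
      by apply: ler_wpM2r; [exact: norm2_ge0| exact: H1].
    rewrite /c; nra.
  - apply: derivable_within_continuous => s _; by case: (D s).
  - by rewrite in_itv /= lexx ler01.
  - by rewrite in_itv /= lexx ler01.
  - exact: ler01.
rewrite /chi !fctE /psi /lin /quad /= !scale1r !scale0r addr0 !mul0r expr0n /= mul0r !subr0.
rewrite expr1n !mul1r; lra.
Qed.

Lemma grad_cont (phi : vec -> R) (G p : vec) : is_grad phi G p ->
  exists2 del : R, 0 < del & forall v, norm2 (v - p) < del ->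
    `|phi v - phi p| <= (norm2 G + 1) * norm2 (v - p).
Proof.
move=> Hg; have [del del0 Hd] := Hg 1 ltr01.
exists del => // v Hv; have := Hd _ Hv; rewrite [p + _]addrC subrK mul1r => H.
have H2 := CS G (v - p).
have H3 : `|phi v - phi p| <= `|phi v - phi p - dot G (v - p)| + `|dot G (v - p)|.
  by apply: le_trans (ler_normD _ _); rewrite subrK.
lra.
Qed.

Lemma lip_ball (phi : vec -> R) (Gp : vec -> vec) (xs : vec) (del M : R) :
  (forall v, norm2 (v - xs) < del -> is_grad phi (Gp v) v /\ norm2 (Gp v) <= M) ->
  forall y z, norm2 (y - xs) < del -> norm2 (z - xs) < del ->
  `|phi z - phi y| <= M * norm2 (z - y).
Proof.
move=> H y z Hy Hz; apply: lip_seg => t Ht; apply: H.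
exact: ball_conv.
Qed.

End Grad.


Section Main.
Variables (R : realType) (n : nat)
  (f : 'rV[R]_n -> \bar R) (g h : 'rV[R]_n -> R)
  (grad_g grad_h : 'rV[R]_n -> 'rV[R]_n) (L : R)
  (alpha : nat -> R) (alo ahi : R) (x : nat -> 'rV[R]_n).
Hypotheses
  (Hf_ninf : forall u, f u != -oo%E)
  (A1i : forall u, omega_dom f g u -> exists2 delta : R, 0 < delta & exists K : R,
     forall y z, omega_dom f g y -> omega_dom f g z ->
       norm2 (y - u) < delta -> norm2 (z - u) < delta ->
       `|fine (f y) - fine (f z)| <= K * norm2 (y - z))
  (A1ii : forall u, omega_dom f g u -> 0 < g u /\
     exists2 delta : R, 0 < delta & exists K : R,
       forall y z, norm2 (y - u) < delta -> norm2 (z - u) < delta ->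
         is_grad g (grad_g y) y /\ norm2 (grad_g y - grad_g z) <= K * norm2 (y - z))
  (A1iii_L : 0 < L)
  (A1iii_grad : forall u, is_grad h (grad_h u) u)
  (A1iii_lip : forall u v, norm2 (grad_h u - grad_h v) <= L * norm2 (u - v))
  (A1iv_nonneg : forall u, f u \is a fin_num -> 0 <= fine (f u) + h u)
  (A1vi_lsc : lsc (Fobj f g h))
  (A1vi_lb : level_bounded (Fobj f g h))
  (Halo : 0 < alo)
  (Halpha : forall k, alo <= alpha k <= ahi)
  (Hahi : ahi < 1 / L)
  (Hx0 : omega_dom f g (x 0%N))
  (Hiter : forall k : nat,
     prox (fun v => ((alpha k)%:E * (f v - (fine (Fobj f g h (x k)) * g v)%:E))%E)
          (x k - alpha k *: grad_h (x k)) (x k.+1)).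

Notation vec := 'rV[R]_n.
Notation F := (Fobj f g h).
Notation od := (omega_dom f g).
Notation ff u := (fine (f u)).
Definition C k := fine (F (x k)).
Definition P k := x k - alpha k *: grad_h (x k).
Definition a' := ahi^-1 - L.

Lemma od_pos u : od u -> 0 < g u.
Proof. by move=> /A1ii []. Qed.
Lemma od_fin u : od u -> f u \is a fin_num.
Proof. by case/andP. Qed.
Lemma od_F u : od u -> F u = ((ff u + h u) / g u)%:E.
Proof. by move=> Hu; rewrite /Fobj Hu. Qed.
Lemma nod_F u : ~~ od u -> F u = +oo%E.
Proof. by move=> Hu; rewrite /Fobj (negbTE Hu). Qed.
Lemma alpha_pos k : 0 < alpha k.
Proof. by have /andP [H _] := Halpha k; apply: lt_le_trans H. Qed.
Lemma ahi_pos : 0 < ahi.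
Proof. by have /andP [H1 H2] := Halpha 0%N; apply: lt_le_trans (le_trans H1 H2). Qed.
Lemma a'_pos : 0 < a'.
Proof.
rewrite /a' subr_gt0 -div1r ltr_pdivlMr ?ahi_pos // mulrC.
by move: Hahi; rewrite ltr_pdivlMr.
Qed.

Lemma prox_fin k v : f v \is a fin_num -> f (x k.+1) \is a fin_num.
Proof.
move=> Hv; rewrite fin_numE Hf_ninf /=; apply/negP => /eqP Ey.
have := Hiter k v; rewrite Ey -(fineK Hv) /=.
by rewrite gt0_muley ?lte_fin ?alpha_pos.
Qed.

Lemma prox_real k v : f v \is a fin_num ->
  alpha k * (ff (x k.+1) - C k * g (x k.+1)) + norm2 (x k.+1 - P k) ^+ 2 / 2 <=
  alpha k * (ff v - C k * g v) + norm2 (v - P k) ^+ 2 / 2.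
Proof.
move=> Hv; have Hy := prox_fin k Hv; have := Hiter k v.
rewrite -(fineK Hv) -(fineK Hy) /=.
by rewrite lee_fin.
Qed.

Lemma step k : od (x k) ->
  od (x k.+1) /\
  ff (x k.+1) + h (x k.+1) + a' / 2 * norm2 (x k.+1 - x k) ^+ 2 <= C k * g (x k.+1).
Proof.
move=> Hk; set y := x k.+1; set d := y - x k; set al := alpha k.
set G := grad_h (x k).
have Hfk := od_fin Hk; have gk := od_pos Hk.
have HC : C k * g (x k) = ff (x k) + h (x k).
  by rewrite /C od_F //= divfK // gt_eqF.
have Hpr := prox_real k Hfk.
have eP1 : x k - P k = al *: G by rewrite /P opprD opprK addrA subrr add0r.
have eP2 : y - P k = d + al *: G by rewrite /P /d opprD opprK addrA.
rewrite eP1 eP2 norm2_sqD norm2Z dotZr in Hpr.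
have Hdes := descent A1iii_grad A1iii_lip (x k) d.
have eyd : x k + d = y by rewrite /d addrC subrK.
rewrite eyd dotC -/G in Hdes.
have al0 := alpha_pos k.
have alahi : al * ahi^-1 <= 1.
  rewrite ler_pdivrMr ?ahi_pos // mul1r.
  by have /andP [] := Halpha k.
have H1 : al * h y <= al * (h (x k) + dot d G + L / 2 * norm2 d ^+ 2).
  by apply: ler_wpM2l => //; apply: ltW.
have nd0 : 0 <= norm2 d ^+ 2 by apply: sqr_ge0.
have H2 : al * (ff y + h y - C k * g y + a' / 2 * norm2 d ^+ 2) <= 0.
  rewrite (ger0_norm (ltW al0)) in Hpr.
  move: Hpr; rewrite mulrBr HC /a'.
  move: H1 alahi nd0; set A := ff y; set Q := norm2 d ^+ 2.
  rewrite /al; set aa := alpha k; set ia := ahi^-1.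
  nra.
have H3 : ff y + h y - C k * g y + a' / 2 * norm2 d ^+ 2 <= 0.
  by move: H2; rewrite pmulr_rle0.
have Hfy := prox_fin k Hfk.
suff gy0 : g y != 0.
  by split; [rewrite /omega_dom gy0 Hfy | lra].
apply/eqP => gy0.
have H4 := A1iv_nonneg Hfy.
have Hq : a' / 2 * norm2 d ^+ 2 <= 0 by move: H3; rewrite gy0 mulr0; lra.
have Hq2 : norm2 d ^+ 2 <= 0.
  by move: Hq; rewrite pmulr_rle0 // divr_gt0 // a'_pos.
have : norm2 d = 0 by apply/eqP; rewrite -sqrf_eq0 eq_le Hq2 nd0.
move=> /norm2_eq0 /eqP; rewrite subr_eq0 => /eqP yk.
by move: gy0; rewrite yk => gk0; move: gk; rewrite gk0 ltxx.
Qed.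

Lemma all_od k : od (x k).
Proof. by elim: k => // k IH; exact: (step IH).1. Qed.

Lemma C_od k : C k = (ff (x k) + h (x k)) / g (x k).
Proof. by rewrite /C od_F ?all_od. Qed.

Lemma F_C k : F (x k) = (C k)%:E.
Proof. by rewrite /C od_F ?all_od. Qed.

Lemma C_ge0 k : 0 <= C k.
Proof.
rewrite C_od; apply: divr_ge0; first by apply: A1iv_nonneg; apply: od_fin; apply: all_od.
by apply: ltW; apply: od_pos; apply: all_od.
Qed.

Lemma C_dec k : C k.+1 + a' / 2 * norm2 (x k.+1 - x k) ^+ 2 / g (x k.+1) <= C k.
Proof.
have [_ H] := step (all_od k).
have gy := od_pos (all_od k.+1).
by rewrite C_od -mulrDl ler_pdivrMr.
Qed.

Lemma C_dec' k : C k.+1 <= C k.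
Proof.
apply: le_trans (C_dec k); rewrite lerDl; apply: divr_ge0.
  by apply: mulr_ge0; [apply: divr_ge0; [apply: ltW; apply: a'_pos|] | apply: sqr_ge0].
by apply: ltW; apply: od_pos; apply: all_od.
Qed.

Lemma C_le0 k : C k <= C 0.
Proof. by elim: k => // k IH; apply: le_trans IH; apply: C_dec'. Qed.

Lemma F_le k : (F (x k) <= (C 0)%:E)%E.
Proof. by rewrite F_C lee_fin C_le0. Qed.

Lemma cluster (s : nat -> vec) : (forall j, (F (s j) <= (C 0)%:E)%E) ->
  exists xs, od xs /\ forall del, 0 < del -> forall J : nat,
    exists j, (J <= j)%N /\ norm2 (s j - xs) < del.
Proof.
move=> Hs.
have [M HM] := A1vi_lb (C 0).
set K := [set v : vec | forall i, `[- M, M]%classic (v ord0 i)].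
have cK : compact K := @rV_compact _ n (fun=> `[- M, M]%classic) (fun i => @segment_compact R (- M) M).
have sK j : K (s j).
  move=> i; rewrite /= in_itv /= -ler_norml.
  exact: le_trans (coord_le_norm2 _ _) (HM _ (Hs j)).
have FK : (s @ \oo) K by apply: filterS (nbhs_infty_ge 0) => j _; exact: sK.
have [xs [Kxs clx]] := cK _ _ FK.
have Hnear : forall del, 0 < del -> forall J : nat,
    exists j, (J <= j)%N /\ norm2 (s j - xs) < del.
  move=> del del0 J.
  have FA : (s @ \oo) (s @` [set j | (J <= j)%N]).
    by apply: filterS (nbhs_infty_ge J) => j Jj; exists j.
  have n1 : 0 < n%:R + 1 :> R by rewrite ltr_wpDl ?ler0n.
  have NB : nbhs xs [set v | norm2 (v - xs) < del].
    apply/nbhs_ballP; exists (del / (n%:R + 1)); first exact: divr_gt0.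
    move=> v [_ Hv] /=.
    have H1 : norm2 (v - xs) <= n%:R * (del / (n%:R + 1)).
      apply: norm2_le_coord; first by apply: divr_ge0; [apply: ltW|apply: ltW].
      move=> i; rewrite !mxE distrC; apply: ltW; exact: Hv ord0 i.
    apply: le_lt_trans H1 _.
    rewrite mulrA ltr_pdivrMr //; nra.
  have [_ [[j Jj <-] Bj]] := clx _ _ FA NB.
  by exists j.
exists xs; split => //.
case: (boolP (od xs)) => // Hno; exfalso.
have : ((C 0)%:E < F xs)%E by rewrite nod_F // ltey.
move=> /A1vi_lsc [del del0 Hdel].
have [j [_ Hj]] := Hnear del del0 0%N.
have := Hdel _ Hj; rewrite ltNge; move/negP; apply; exact: Hs.
Qed.

Lemma seq_bound (Q : nat -> R) :
  (forall xs, od xs -> exists2 del : R, 0 < del & exists B : R,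
      forall k, norm2 (x k - xs) < del -> Q k <= B) ->
  exists B, forall k, Q k <= B.
Proof.
move=> Hloc; apply: contrapT => Hno.
have Hk (j : nat) : exists k, (j%:R < Q k).
  apply: contrapT => H; apply: Hno; exists j%:R => k.
  rewrite leNgt; apply/negP => Hq; apply: H; by exists k.
have [kk Hkk] := choice Hk.
have [xs [Hxs Hnear]] := @cluster (fun j => x (kk j)) (fun j => F_le (kk j)).
have [del del0 [B HB]] := Hloc xs Hxs.
have HN := archi_boundP (normr_ge0 B).
have [j [Jj Hj]] := Hnear del del0 (Num.Def.archi_bound `|B|).
have := HB _ Hj; have := Hkk j.
have : (Num.Def.archi_bound `|B|)%:R <= j%:R :> R by rewrite ler_nat.
have := ler_norm B; lra.
Qed.

Lemma g_grad u : od u -> is_grad g (grad_g u) u.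
Proof.
move=> Hu; have [_ [del del0 [K HK]]] := A1ii Hu.
by have [] := HK u u; rewrite subrr norm2_0.
Qed.

Lemma gB : exists G, forall k, g (x k) <= G.
Proof.
apply: seq_bound => xs Hxs.
have [del del0 Hd] := grad_cont (g_grad Hxs).
exists (Num.min del 1); first by rewrite lt_min del0 ltr01.
exists (g xs + (norm2 (grad_g xs) + 1)) => k; rewrite lt_min => /andP [H1 H2].
have := Hd _ H1; have := ler_norm (g (x k) - g xs).
have := norm2_ge0 (grad_g xs); have := norm2_ge0 (x k - xs); nra.
Qed.

Lemma gm : exists2 m, 0 < m & forall k, m <= g (x k).
Proof.
have [B HB] : exists B, forall k, (g (x k))^-1 <= B.
  apply: seq_bound => xs Hxs.
  have gxs := od_pos Hxs.
  have [del del0 Hd] := grad_cont (g_grad Hxs).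
  set c := norm2 (grad_g xs) + 1.
  have c0 : 0 < c by rewrite /c ltr_wpDl ?norm2_ge0.
  exists (Num.min del (g xs / (2 * c))).
    by rewrite lt_min del0 divr_gt0 // mulr_gt0.
  exists (2 / g xs) => k; rewrite lt_min => /andP [H1 H2].
  have := Hd _ H1; rewrite -/c => H3.
  have H4 : c * norm2 (x k - xs) <= g xs / 2.
    move: H2; rewrite ltr_pdivlMr ?mulr_gt0 // => H2.
    have : norm2 (x k - xs) * (2 * c) <= g xs by apply: ltW.
    by rewrite ler_pdivlMr //; lra.
  have H5 : g xs / 2 <= g (x k).
    have := ler_norm (g xs - g (x k)); rewrite distrC; lra.
  have gk : 0 < g xs / 2 by apply: divr_gt0.
  rewrite -[2 / g xs]invf_div lef_pV2 ?posrE //.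
  exact: lt_le_trans H5.
have B0 : 0 < B.
  apply: lt_le_trans (HB 0%N); rewrite invr_gt0; apply: od_pos; exact: all_od.
exists B^-1; first by rewrite invr_gt0.
move=> k; have gk := od_pos (all_od k).
by rewrite -[g (x k)]invrK lef_pV2 ?posrE ?invr_gt0.
Qed.

Lemma ggB : exists Gg, forall k, norm2 (grad_g (x k)) <= Gg.
Proof.
apply: seq_bound => xs Hxs.
have [_ [del del0 [K HK]]] := A1ii Hxs.
exists del => //; exists (norm2 (grad_g xs) + `|K| * del) => k Hk.
have H0 : norm2 (xs - xs) < del by rewrite subrr norm2_0.
have [_ H] := HK (x k) xs Hk H0.
have H2 := norm2D (grad_g (x k) - grad_g xs) (grad_g xs).
rewrite subrK in H2.
have H3 : K * norm2 (x k - xs) <= `|K| * del.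
  apply: le_trans (ler_norm _) _; rewrite normrM (ger0_norm (norm2_ge0 _)).
  by apply: ler_wpM2l; [apply: normr_ge0 | apply: ltW].
lra.
Qed.

Lemma C_fin_eq k : ff (x k) + h (x k) = C k * g (x k).
Proof. by rewrite C_od divfK // gt_eqF //; apply: od_pos; apply: all_od. Qed.

Lemma dC : exists c, forall k, `|C k - C k.+1| <= c * norm2 (x k.+1 - x k).
Proof.
have [m m0 Hm] := gm.
have C00 := C_ge0 0.
have dCle k : `|C k - C k.+1| <= C 0.
  have := C_ge0 k; have := C_ge0 k.+1; have := C_le0 k; have := C_le0 k.+1.
  have := C_dec' k; rewrite ler_norml; lra.
have [B HB] : exists B, forall k, `|C k - C k.+1| / norm2 (x k.+1 - x k) <= B.
  apply: seq_bound => xs Hxs.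
  have [df df0 [Kf HKf]] := A1i Hxs.
  have [_ [dg dg0 [Kg HKg]]] := A1ii Hxs.
  set del := Num.min df (Num.min dg 1).
  have del0 : 0 < del by rewrite !lt_min df0 dg0 ltr01.
  set Mg := norm2 (grad_g xs) + `|Kg| * dg.
  set Mh := norm2 (grad_h xs) + L.
  have H0 : norm2 (xs - xs) < dg by rewrite subrr norm2_0.
  have Lg : forall y z, norm2 (y - xs) < dg -> norm2 (z - xs) < dg ->
      `|g z - g y| <= Mg * norm2 (z - y).
    apply: (lip_ball (Gp := grad_g)) => v Hv; have [Hg Hl] := HKg v xs Hv H0; split => //.
    have H2 := norm2D (grad_g v - grad_g xs) (grad_g xs); rewrite subrK in H2.
    have H3 : Kg * norm2 (v - xs) <= `|Kg| * dg.
      apply: le_trans (ler_norm _) _; rewrite normrM (ger0_norm (norm2_ge0 _)).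
      by apply: ler_wpM2l; [apply: normr_ge0 | apply: ltW].
    rewrite /Mg; lra.
  have Lh : forall y z, norm2 (y - xs) < 1 -> norm2 (z - xs) < 1 ->
      `|h z - h y| <= Mh * norm2 (z - y).
    apply: (lip_ball (Gp := grad_h)) => v Hv; split => //.
    have H2 := norm2D (grad_h v - grad_h xs) (grad_h xs); rewrite subrK in H2.
    have H3 := A1iii_lip v xs.
    have H4 : L * norm2 (v - xs) <= L by rewrite ger_pMr // ltW.
    rewrite /Mh; lra.
  have Mg0 : 0 <= Mg by rewrite /Mg addr_ge0 ?norm2_ge0 // mulr_ge0 // ltW.
  have Mh0 : 0 <= Mh by rewrite /Mh addr_ge0 ?norm2_ge0 // ltW.
  set c0 := (`|Kf| + Mh + C 0 * Mg) / m.
  have c00 : 0 <= c0.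
    rewrite /c0; apply: divr_ge0; last exact: ltW.
    by apply: addr_ge0; [apply: addr_ge0 => //; exact: normr_ge0 | exact: mulr_ge0].
  exists (del / 2); first by rewrite divr_gt0.
  exists (c0 + 2 * C 0 / del) => k Hk.
  set d := norm2 (x k.+1 - x k).
  have d0 : 0 <= d := norm2_ge0 _.
  have T2 : 0 <= 2 * C 0 / del by rewrite divr_ge0 ?mulr_ge0 // ltW.
  case: (ltP d (del / 2)) => Hd.
  - have Hk1 : norm2 (x k.+1 - xs) < del.
      have := norm2D (x k.+1 - x k) (x k - xs); rewrite addrA subrK -/d; lra.
    have Hk0 : norm2 (x k - xs) < del by lra.
    move: Hk0 Hk1; rewrite !lt_min => /andP [Hf0 /andP [Hg0 Hh0]] /andP [Hf1 /andP [Hg1 Hh1]].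
    have Hf := HKf _ _ (all_od k) (all_od k.+1) Hf0 Hf1.
    have Hgg := Lg _ _ Hg1 Hg0.
    have Hhh := Lh _ _ Hh1 Hh0.
    rewrite -norm2B -/d in Hf Hgg Hhh.
    have gk := od_pos (all_od k).
    have mk := Hm k.
    have E : C k - C k.+1 = (ff (x k) - ff (x k.+1) + (h (x k) - h (x k.+1))
               - C k.+1 * (g (x k) - g (x k.+1))) / g (x k).
      have := C_fin_eq k.+1; rewrite C_od => HH.
      rewrite C_od; apply: (@mulIf _ (g (x k))); first by rewrite gt_eqF.
      rewrite mulrBl !divfK ?gt_eqF //; lra.
    have HN : `|ff (x k) - ff (x k.+1) + (h (x k) - h (x k.+1))
               - C k.+1 * (g (x k) - g (x k.+1))| <= (`|Kf| + Mh + C 0 * Mg) * d.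
      have HC1 : `|C k.+1 * (g (x k) - g (x k.+1))| <= C 0 * (Mg * d).
        rewrite normrM ger0_norm ?C_ge0 //.
        apply: ler_pM; [exact: C_ge0 | exact: normr_ge0 | exact: C_le0 | exact: Hgg].
      have HK1 : Kf * d <= `|Kf| * d by apply: ler_wpM2r => //; apply: ler_norm.
      apply: le_trans (ler_normB _ _) _; apply: le_trans (lerD (ler_normD _ _) (lexx _)) _.
      lra.
    have HdC : `|C k - C k.+1| <= c0 * d.
      rewrite E normrM normfV (ger0_norm (ltW gk)) /c0.
      rewrite mulrAC; apply: ler_pM; first exact: normr_ge0.
      - by rewrite invr_ge0 ltW.
      - exact: HN.
      - by rewrite lef_pV2 ?posrE.
    have [d00|dpos] := eqVneq d 0.
      by rewrite d00 invr0 mulr0 addr_ge0.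
    have dp : 0 < d by rewrite lt_def dpos d0.
    rewrite ler_pdivrMr //; apply: le_trans HdC _.
    by rewrite ler_wpM2r // lerDl.
  - have dp : 0 < d by apply: lt_le_trans Hd; rewrite divr_gt0.
    rewrite ler_pdivrMr //; apply: le_trans (dCle k) _.
    have : 2 * C 0 / del * d >= C 0.
      have : del <= 2 * d by lra.
      rewrite mulrAC ler_pdivlMr //; nra.
    have : (2 * C 0 / del) * d <= (c0 + 2 * C 0 / del) * d.
      by apply: ler_wpM2r => //; lra.
    lra.
exists B => k.
set d := norm2 (x k.+1 - x k).
have [d00|dpos] := eqVneq d 0.
  have := norm2_eq0 d00; move/eqP; rewrite subr_eq0 => /eqP e.
  by rewrite d00 mulr0 /C e subrr normr0.
have dp : 0 < d by rewrite lt_def dpos norm2_ge0.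
by rewrite -ler_pdivrMr.
Qed.

Lemma part1 : exists2 a : R, 0 < a & forall k : nat,
     (F (x k.+1) + (a / 2 * norm2 (x k.+1 - x k) ^+ 2)%:E <= F (x k))%E.
Proof.
have [G HG] := gB.
have G0 : 0 < G by apply: lt_le_trans (HG 0%N); apply: od_pos; apply: all_od.
exists (a' / G); first by rewrite divr_gt0 ?a'_pos.
move=> k; rewrite !F_C -EFinD lee_fin; apply: le_trans (C_dec k).
rewrite lerD2l.
have gy := od_pos (all_od k.+1).
set Q := norm2 (x k.+1 - x k) ^+ 2.
have -> : a' / G / 2 * Q = (a' / 2 * Q) * G^-1 by ring.
apply: ler_wpM2l; first by rewrite mulr_ge0 ?sqr_ge0 // divr_ge0 // ltW // a'_pos.
by rewrite lef_pV2 ?posrE.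
Qed.

Lemma Nnorm_le (r : R) : - `|r| <= r.
Proof. by have := ler_norm (- r); rewrite normrN; lra. Qed.

Definition u k := (C k - C k.+1) *: grad_g (x k.+1)
   - (alpha k)^-1 *: (x k.+1 - P k) + grad_h (x k.+1).
Definition w k := (g (x k.+1))^-1 *: u k.

Lemma frechet k : frechet_subdiff F (x k.+1) (w k).
Proof.
have Hy := all_od k.+1.
set y := x k.+1.
have gy0 : 0 < g y := od_pos Hy.
split; first by rewrite F_C.
move=> eps eps0.
set D := `|C k - C k.+1| + 1.
have D0 : 0 < D by rewrite /D ltr_wpDl ?normr_ge0.
set e1 := eps * g y / (4 * D).
have e10 : 0 < e1 by rewrite /e1 !divr_gt0 ?mulr_gt0.
have [dg1 dg10 Hg1] := g_grad Hy e10.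
have [dh1 dh10 Hh1] := A1iii_grad y e10.
have [dc dc0 Hc] := grad_cont (g_grad Hy).
set K3 := norm2 (grad_g y) + 1.
have K30 : 0 < K3 by rewrite /K3 ltr_wpDl ?norm2_ge0.
set U := norm2 (u k).
have U0 : 0 <= U := norm2_ge0 _.
set al := alpha k.
have al0 : 0 < al := alpha_pos k.
set den := g y / (2 * al) + U * K3.
have den0 : 0 < den by rewrite /den ltr_pwDl ?mulr_ge0 ?(ltW K30) // divr_gt0 // mulr_gt0.
set r5 := eps * g y ^+ 2 / (4 * den).
have r50 : 0 < r5 by rewrite /r5 divr_gt0 ?mulr_gt0 ?exprn_gt0.
set r4 := g y / (2 * K3).
have r40 : 0 < r4 by rewrite /r4 divr_gt0 ?mulr_gt0.
exists (Num.min dg1 (Num.min dh1 (Num.min dc (Num.min r4 r5)))).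
  by rewrite !lt_min dg10 dh10 dc0 r40 r50.
move=> z /andP [ez0]; rewrite !lt_min => /and5P [Hdg Hdh Hdc Hr4 Hr5].
case: (boolP (od z)) => Hz; last by rewrite nod_F // F_C /= leey.
rewrite od_F // F_C -!EFinB lee_fin.
set e := z - y; set ne := norm2 e.
have ez : y + e = z by rewrite /e addrC subrK.
have b1 := Hg1 e Hdg; rewrite ez in b1.
have b2 := Hh1 e Hdh; rewrite ez in b2.
have b5 := Hc z Hdc; rewrite -/K3 -/e in b5.
have Hpr := prox_real k (od_fin Hz).
have ezP : z - P k = e + (y - P k) by rewrite /e addrA subrK.
rewrite ezP (norm2_sqD e) -/y in Hpr.
have Hfy := C_fin_eq k.+1; rewrite -/y in Hfy.
set ΔC := C k - C k.+1.
set yP := y - P k.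
set due := dot (u k) e.
have Edue : due = ΔC * dot (grad_g y) e - al^-1 * dot yP e + dot (grad_h y) e.
  by rewrite /due /u dotDl dotBl !dotZl.
have Ewe : dot (w k) e = (g y)^-1 * due by rewrite /w dotZl.
rewrite Ewe.
set gz := g z.
set gy := g y.
set T := ff z + h z - C k.+1 * gz.
rewrite -/ne in b1 b2 b5; rewrite -/gz -/gy in b1 b5.
have s1 : al * (T - due) >= - ne ^+ 2 / 2 + al * ΔC * (gz - gy - dot (grad_g y) e)
     + al * (h z - h y - dot (grad_h y) e).
  rewrite Edue /T /ΔC; move: Hpr Hfy; rewrite /ne dotC.
  set A := dot yP e; set N2 := norm2 e ^+ 2; set Y := norm2 yP ^+ 2.
  rewrite -/gz -/gy -/al => Hpr Hfy.
  have hal : al * al^-1 = 1 by rewrite mulfV // gt_eqF.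
  have hA : al * (al^-1 * A) = A by rewrite mulrA hal mul1r.
  have Hfy' : al * (ff y + h y) = al * (C k.+1 * gy) by rewrite Hfy.
  lra.
have b3 : ΔC * (gz - gy - dot (grad_g y) e) >= - ((D - 1) * (e1 * ne)).
  have := Nnorm_le (ΔC * (gz - gy - dot (grad_g y) e)).
  have : `|ΔC * (gz - gy - dot (grad_g y) e)| <= (D - 1) * (e1 * ne).
    rewrite normrM.
    apply: ler_pM; [exact: normr_ge0 | exact: normr_ge0 | rewrite /D; lra | exact: b1].
  lra.
have b2' : h z - h y - dot (grad_h y) e >= - (e1 * ne).
  by have := Nnorm_le (h z - h y - dot (grad_h y) e); lra.
have s2 : T - due >= - ne ^+ 2 / (2 * al) - D * e1 * ne.
  have s1' : al * (T - due) >= al * (- ne ^+ 2 / (2 * al) - D * e1 * ne).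
    apply: le_trans s1.
    have -> : al * (- ne ^+ 2 / (2 * al) - D * e1 * ne) = - ne ^+ 2 / 2 - al * (D * e1 * ne).
      by field; rewrite gt_eqF.
    have h3 : al * ΔC * (gz - gy - dot (grad_g y) e) >= - (al * ((D - 1) * (e1 * ne))).
      by rewrite -mulrA -mulrN; apply: ler_wpM2l => //; apply: ltW.
    have h4 : al * (h z - h y - dot (grad_h y) e) >= - (al * (e1 * ne)).
      by rewrite -mulrN; apply: ler_wpM2l => //; apply: ltW.
    have : al * ((D - 1) * (e1 * ne)) + al * (e1 * ne) = al * (D * e1 * ne) by ring.
    lra.
  by move: s1'; rewrite ler_pM2l.
have b4 : `|due| <= U * ne by rewrite /due /U /ne; apply: CS.
have gz0 : gy / 2 <= gz.
  have : K3 * ne <= gy / 2.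
    move: Hr4; rewrite /r4 ltr_pdivlMr ?mulr_gt0 // => H.
    have : ne * (2 * K3) <= gy by apply: ltW.
    rewrite -/gy; lra.
  have := ler_norm (gy - gz); rewrite distrC; lra.
have gzp : 0 < gz by apply: lt_le_trans gz0; rewrite divr_gt0.
have b6 : (gy - gz) * due >= - ((K3 * ne) * (U * ne)).
  have := Nnorm_le ((gy - gz) * due).
  have : `|(gy - gz) * due| <= (K3 * ne) * (U * ne).
    rewrite normrM.
    apply: ler_pM; [exact: normr_ge0 | exact: normr_ge0 | by rewrite distrC | exact: b4].
  lra.
have ne0 : 0 <= ne := norm2_ge0 _.
have b8 : eps * ne * gz * gy >= eps * ne * (gy / 2) * gy.
  apply: ler_wpM2r; first exact: ltW.
  by apply: ler_wpM2l => //; apply: mulr_ge0 => //; apply: ltW.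
have b9 : ne * den <= eps * gy ^+ 2 / 4.
  move: Hr5; rewrite /r5 ltr_pdivlMr ?mulr_gt0 // => H.
  have : ne * (4 * den) <= eps * gy ^+ 2 by apply: ltW.
  lra.
have b10 : D * e1 = eps * gy / 4 by rewrite /e1 -/gy; field; rewrite gt_eqF.
have X : 0 <= gy * T - gz * due + eps * ne * gz * gy.
  have h1 : gy * (T - due) >= gy * (- ne ^+ 2 / (2 * al) - D * e1 * ne).
    by apply: ler_wpM2l => //; apply: ltW.
  have h2 : gy * (- ne ^+ 2 / (2 * al) - D * e1 * ne)
      = - (ne * (ne * (gy / (2 * al)))) - (D * e1) * gy * ne.
    by field; rewrite gt_eqF.
  have h3 : ne * (ne * den) <= ne * (eps * gy ^+ 2 / 4) by apply: ler_wpM2l.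
  rewrite b10 in h1 h2; rewrite /den -/gy in h3.
  have HH : gy * T - gz * due = gy * (T - due) + (gy - gz) * due by ring.
  lra.
have E : (ff z + h z) / gz - C k.+1 - gy^-1 * due + eps * ne
    = (gy * T - gz * due + eps * ne * gz * gy) / (gz * gy).
  by rewrite /T; field; rewrite !gt_eqF.
have : 0 <= (gy * T - gz * due + eps * ne * gz * gy) / (gz * gy).
  by apply: divr_ge0 => //; apply: mulr_ge0; apply: ltW.
rewrite -E; lra.
Qed.

Lemma u_eq k : u k = (C k - C k.+1) *: grad_g (x k.+1)
   - ((alpha k)^-1 *: (x k.+1 - x k) + (grad_h (x k) - grad_h (x k.+1))).
Proof.
have al0 := alpha_pos k.
rewrite /u /P; apply/rowP => i; rewrite !mxE.
by field; rewrite gt_eqF.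
Qed.

Lemma wbound : exists2 b : R, 0 < b & forall k,
  norm2 (w k) <= b * norm2 (x k.+1 - x k).
Proof.
have [m m0 Hm] := gm.
have [Gg HGg] := ggB.
have [c Hc] := dC.
set K := `|c| * `|Gg| + alo^-1 + L.
have K0 : 0 < K.
  rewrite /K -addrA ltr_pwDr ?mulr_ge0 ?normr_ge0 //.
  by rewrite addr_gt0 // invr_gt0.
exists (m^-1 * K); first by rewrite mulr_gt0 ?invr_gt0.
move=> k; set d := norm2 (x k.+1 - x k).
have gy := od_pos (all_od k.+1).
rewrite /w norm2Z ger0_norm; last by rewrite invr_ge0 ltW.
have d0 : 0 <= d := norm2_ge0 _.
have Hu : norm2 (u k) <= K * d.
  rewrite u_eq.
  apply: le_trans (norm2DB _ _) _.
  apply: le_trans (lerD (lexx _) (norm2D _ _)) _.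
  rewrite !norm2Z.
  have al0 := alpha_pos k.
  have h1 : `|C k - C k.+1| * norm2 (grad_g (x k.+1)) <= `|c| * `|Gg| * d.
    rewrite mulrAC; apply: ler_pM; [exact: normr_ge0 | exact: norm2_ge0 | | ].
      by apply: le_trans (Hc k) _; rewrite ler_wpM2r // ler_norm.
    by apply: le_trans (HGg _) (ler_norm _).
  have h2 : `|(alpha k)^-1| * d <= alo^-1 * d.
    apply: ler_wpM2r => //; rewrite ger0_norm; last by rewrite invr_ge0 ltW.
    by rewrite lef_pV2 ?posrE //; have /andP [] := Halpha k.
  have h3 : norm2 (grad_h (x k) - grad_h (x k.+1)) <= L * d.
    by rewrite /d norm2B; apply: A1iii_lip.
  rewrite /K -/d; lra.
apply: le_trans (ler_wpM2l _ Hu) _; first by rewrite invr_ge0 ltW.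
rewrite mulrA; apply: ler_wpM2r; first exact: d0.
apply: ler_wpM2r; first exact: ltW.
by rewrite lef_pV2 ?posrE.
Qed.

Lemma part2 : exists2 b : R, 0 < b & exists w : nat -> 'rV[R]_n, forall k : nat,
     limiting_subdiff F (x k.+1) (w k) /\
     norm2 (w k) <= b * norm2 (x k.+1 - x k).
Proof.
have [b b0 Hb] := wbound.
exists b => //; exists w => k; split; last exact: Hb.
exists (fun _ => x k.+1), (fun _ => w k); split.
- exact: cvg_cst.
- exact: cvg_cst.
- by move=> j; apply: frechet.
- exact: cvg_cst.
Qed.

End Main.

End Aux.

Theorem mainTheorem11 (R : realType) (n : nat)
  (f : 'rV[R]_n -> \bar R) (g h : 'rV[R]_n -> R)
  (grad_g grad_h : 'rV[R]_n -> 'rV[R]_n) (L : R)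
  (alpha : nat -> R) (alo ahi : R) (x : nat -> 'rV[R]_n)
  (* f : R^n -> (-oo, +oo] proper lsc *)
  (Hf_ninf : forall u, f u != -oo%E)
  (Hf_proper : exists u, f u \is a fin_num)
  (Hf_lsc : lsc f)
  (* (i) f locally Lipschitz on dom f ∩ Omega *)
  (A1i : forall u, omega_dom f g u -> exists2 delta : R, 0 < delta & exists K : R,
     forall y z, omega_dom f g y -> omega_dom f g z ->
       norm2 (y - u) < delta -> norm2 (z - u) < delta ->
       `|fine (f y) - fine (f z)| <= K * norm2 (y - z))
  (* (ii) g C^1 with locally Lipschitz gradient, and positive, on Omega ∩ dom f *)
  (A1ii : forall u, omega_dom f g u -> 0 < g u /\
     exists2 delta : R, 0 < delta & exists K : R,
       forall y z, norm2 (y - u) < delta -> norm2 (z - u) < delta ->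
         is_grad g (grad_g y) y /\ norm2 (grad_g y - grad_g z) <= K * norm2 (y - z))
  (* (iii) grad h is L-Lipschitz, L > 0 *)
  (A1iii_L : 0 < L)
  (A1iii_grad : forall u, is_grad h (grad_h u) u)
  (A1iii_lip : forall u v, norm2 (grad_h u - grad_h v) <= L * norm2 (u - v))
  (* (iv) *)
  (A1iv_nonneg : forall u, f u \is a fin_num -> 0 <= fine (f u) + h u)
  (A1iv_ne : exists u, omega_dom f g u)
  (* (v) prox_{f - gamma g}(u) nonempty *)
  (A1v : forall (u : 'rV[R]_n) (gam : R), 0 <= gam ->
     exists p, prox (fun v => (f v - (gam * g v)%:E)%E) u p)
  (* (vi) F lsc and level bounded *)
  (A1vi_lsc : lsc (Fobj f g h))
  (A1vi_lb : level_bounded (Fobj f g h))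
  (* PPGA *)
  (Halo : 0 < alo)
  (Halpha : forall k, alo <= alpha k <= ahi)
  (Hahi : ahi < 1 / L)
  (Hx0 : omega_dom f g (x 0%N))
  (Hiter : forall k : nat,
     prox (fun v => ((alpha k)%:E * (f v - (fine (Fobj f g h (x k)) * g v)%:E))%E)
          (x k - alpha k *: grad_h (x k)) (x k.+1)) :
  (exists2 a : R, 0 < a & forall k : nat,
     (Fobj f g h (x k.+1) + (a / 2 * norm2 (x k.+1 - x k) ^+ 2)%:E <= Fobj f g h (x k))%E)
  /\
  (exists2 b : R, 0 < b & exists w : nat -> 'rV[R]_n, forall k : nat,
     limiting_subdiff (Fobj f g h) (x k.+1) (w k) /\
     norm2 (w k) <= b * norm2 (x k.+1 - x k)).
Proof.
split; [eapply (@Aux.part1 R n f g h grad_g grad_h L alpha alo ahi x) | eapply (@Aux.part2 R n f g h grad_g grad_h L alpha alo ahi x)]; eassumption.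
Qed.
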